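(* Let $G$ be a connected $\mathrm{NP}_1$-digital topological group with identity $e$, and let $S$ be the set of points of $G$ adjacent to $e$. Then $S$ generates $G$ as a group, and $G$ is the Cayley graph $\Gamma(G,S)$.
   Context: A digital image is a finite set with a reflexive symmetric adjacency relation (a finite reflexive graph); continuous maps send adjacent points to adjacent points; connected means graph-connected. On $G\times G$, $\mathrm{NP}_1$ declares $(a,b)\sim(c,d)$ iff either $a=c$ and $b\sim d$, or $b=d$ and $a\sim c$. An $\mathrm{NP}_1$-digital topological group is a digital image $G$ with a group structure whose multiplication is $\mathrm{NP}_1$-continuous and whose inversion is continuous. For a finite group $G$ and $S\subseteq G$, the Cayley graph $\Gamma(G,S)$ has vertex set $G$ and $a\sim b$ iff $ab^{-1}\in S$ or $ba^{-1}\in S$. *)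

(* Defs.v *)
From mathcomp Require Import all_boot all_fingroup.
Set Implicit Arguments. Unset Strict Implicit. Unset Printing Implicit Defensive.

Definition digital_image (T : finType) (adj : rel T) : Prop :=
  reflexive adj /\ symmetric adj.

Definition dcontinuous (T U : finType) (adjT : rel T) (adjU : rel U)
  (f : T -> U) : Prop :=
  forall x y, adjT x y -> adjU (f x) (f y).

Definition NP1 (T : finType) (adj : rel T) : rel (T * T) :=
  fun p q => ((p.1 == q.1) && adj p.2 q.2) || ((p.2 == q.2) && adj p.1 q.1).

Definition dconnected (T : finType) (adj : rel T) : Prop :=
  forall x y, connect adj x y.

Definition NP1_digital_top_group (gT : finGroupType) (adj : rel gT) : Prop :=
  [/\ digital_image adj,
      dcontinuous (NP1 adj) adj (fun p : gT * gT => (p.1 * p.2)%g)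
    & dcontinuous adj adj (fun x : gT => x^-1)%g].

Definition cayley_adj (gT : finGroupType) (S : {set gT}) : rel gT :=
  fun a b => ((a * b^-1)%g \in S) || ((b * a^-1)%g \in S).

(* Main.v *)
Require Import Defs.
From mathcomp Require Import all_boot all_fingroup.

Theorem theoremA (gT : finGroupType) (adj : rel gT) :
  NP1_digital_top_group adj -> dconnected adj ->
  let S := [set x : gT | adj 1%g x] in
  <<S>>%g = [set: gT] /\ adj =2 cayley_adj S.
Proof.
move=> [[refl sym] cm ci] conn S.
have mr : forall x y z, adj x y -> adj (x * z)%g (y * z)%g.
  move=> x y z h; apply: (cm (x, z) (y, z)).
  by rewrite /NP1 /= eqxx h orbT.
have key : forall a b, adj a b = ((b * a^-1)%g \in S).
  move=> a b; rewrite inE; apply/idP/idP => h.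
    by have := mr _ _ a^-1%g h; rewrite mulgV.
  by have := mr _ _ a h; rewrite mul1g -mulgA mulVg mulg1.
split.
  apply/setP => x; rewrite inE.
  have cl : closed adj (mem <<S>>%g).
    move=> y z h; apply/idP/idP => hy.
      have -> : z = ((z * y^-1) * y)%g by rewrite -mulgA mulVg mulg1.
      by rewrite groupM // mem_gen // -key.
    rewrite sym in h.
    have -> : y = ((y * z^-1) * z)%g by rewrite -mulgA mulVg mulg1.
    by rewrite groupM // mem_gen // -key.
  by rewrite -(closed_connect cl (conn 1%g x)) group1.
move=> a b; rewrite /cayley_adj key.
apply/idP/idP => [h|/orP[h|//]]; first by rewrite h orbT.
rewrite inE in h *; have := ci _ _ h.
rewrite invg1 invMg invgK => H; by rewrite /S inE.
Qed.
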